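(* Let $(\mathfrak g,\mathfrak g^*,E)$ be an ENL bialgebra, let $\mathfrak d=\mathfrak g\bowtie\mathfrak g^*$ be its Drinfel'd double and $\mathfrak d^*_r$ the dual Lie algebra defined below. Then $(\mathfrak d,\mathfrak d^*_r,\mathfrak E)$ is an ENL bialgebra, where $\mathfrak E:\mathfrak g\oplus\mathfrak g^*\to\mathfrak g\oplus\mathfrak g^*$, $\mathfrak E(x+\xi)=Ex+E^*\xi$ (with dual map $\mathfrak E^*(\xi+x)=E^*\xi+Ex$ on $\mathfrak d^*\cong\mathfrak g^*\oplus\mathfrak g$).
   Context: Vector spaces are finite-dimensional over an algebraically closed field of characteristic zero. An ENL algebra is a Lie algebra with linear $E$ satisfying $E[x,y]=[x,Ey]$ for all $x,y$. A Lie bialgebra $(\mathfrak g,\mathfrak g^* )$ consists of Lie brackets on $\mathfrak g$ and $\mathfrak g^*$ such that the map $\Delta:\mathfrak g\to\mathfrak g\otimes\mathfrak g$ dual to $[\cdot,\cdot]_{\mathfrak g^*}$ satisfies $\Delta([x,y])=(\mathrm{ad}_x\otimes\mathrm{Id}+\mathrm{Id}\otimes\mathrm{ad}_x)\Delta(y)-(\mathrm{ad}_y\otimes\mathrm{Id}+\mathrm{Id}\otimes\mathrm{ad}_y)\Delta(x)$. An ENL bialgebra $(\mathfrak g,\mathfrak g^*,E)$ is a Lie bialgebra such that $(\mathfrak g,E)$ and $(\mathfrak g^*,E^* )$ are ENL algebras ($E^*$ the dual map). The Drinfel'd double $\mathfrak d=\mathfrak g\bowtie\mathfrak g^*$ is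 $\mathfrak g\oplus\mathfrak g^*$ with bracket $[x+\xi,y+\eta]=([x,y]_{\mathfrak g}+\mathfrak{ad}^*_\xi y-\mathfrak{ad}^*_\eta x)+([\xi,\eta]_{\mathfrak g^*}+\mathrm{ad}^*_x\eta-\mathrm{ad}^*_y\xi)$, where $\langle\mathrm{ad}^*_x\xi,y\rangle=-\langle\xi,[x,y]_{\mathfrak g}\rangle$ and $\langle\mathfrak{ad}^*_\xi x,\eta\rangle=-\langle x,[\xi,\eta]_{\mathfrak g^*}\rangle$. With $r=\sum_i e_i\otimes\xi_i$ for dual bases, $\mathfrak d^*_r$ is $\mathfrak d^*\cong\mathfrak g^*\oplus\mathfrak g$ with bracket $[\xi+x,\eta+y]_r=(-[\xi,\eta]_{\mathfrak g^*},[x,y]_{\mathfrak g})$; it is known that $(\mathfrak d,\mathfrak d^*_r)$ is a (quasi-triangular) Lie bialgebra. The claim thus means $\mathfrak E$ is equivariant on $\mathfrak d$ and $\mathfrak E^*$ is equivariant on $\mathfrak d^*_r$. *)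

(* Defs.v *)
From HB Require Import structures.
From mathcomp Require Import all_boot all_order all_algebra.
Set Implicit Arguments. Unset Strict Implicit. Unset Printing Implicit Defensive.
Import GRing.Theory.
Local Open Scope ring_scope.

(* Coordinates: an n-dimensional space g is 'rV[F]_n, its dual g^* is also
   'rV[F]_n with the standard pairing, so that the standard basis
   e_i = delta_mx 0 i of g^* is dual to the standard basis of g.
   A linear endomorphism E of g is a matrix M acting on the right
   (x |-> x *m M); its dual map E^* is then xi |-> xi *m M^T. *)

Section Defs.
Variable F : fieldType.

Definition pair n (x xi : 'rV[F]_n) : F := \sum_(i < n) x 0 i * xi 0 i.

Definition ebasis n (i : 'I_n) : 'rV[F]_n := delta_mx 0 i.

Definition is_lie n (br : 'rV[F]_n -> 'rV[F]_n -> 'rV[F]_n) : Prop :=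
  [/\ forall a x y z, br (a *: x + y) z = a *: br x z + br y z,
      forall a x y z, br z (a *: x + y) = a *: br z x + br z y,
      forall x, br x x = 0
    & forall x y z, br x (br y z) + br y (br z x) + br z (br x y) = 0].

Definition is_enl n (br : 'rV[F]_n -> 'rV[F]_n -> 'rV[F]_n) (M : 'M[F]_n) : Prop :=
  is_lie br /\ forall x y, br x y *m M = br x (y *m M).

Definition adm n (br : 'rV[F]_n -> 'rV[F]_n -> 'rV[F]_n) (x : 'rV[F]_n) : 'M[F]_n :=
  \matrix_(i, j) br x (ebasis i) 0 j.

(* Delta(y) in g (x) g, represented as the n x n matrix of coefficients of
   e_i (x) e_j: Delta(y)_{ij} = <y, [xi_i, xi_j]_*>, Delta dual to brs. *)
Definition cobr n (brs : 'rV[F]_n -> 'rV[F]_n -> 'rV[F]_n) (y : 'rV[F]_n) : 'M[F]_n :=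
  \matrix_(i, j) pair y (brs (ebasis i) (ebasis j)).

(* (ad_x (x) Id) T = (adm x)^T *m T,  (Id (x) ad_x) T = T *m adm x *)
Definition is_lie_bialg n (br brs : 'rV[F]_n -> 'rV[F]_n -> 'rV[F]_n) : Prop :=
  [/\ is_lie br, is_lie brs &
      forall x y, cobr brs (br x y) =
        ((adm br x)^T *m cobr brs y + cobr brs y *m adm br x)
      - ((adm br y)^T *m cobr brs x + cobr brs x *m adm br y)].

Definition is_enl_bialg n (br brs : 'rV[F]_n -> 'rV[F]_n -> 'rV[F]_n) (M : 'M[F]_n) : Prop :=
  [/\ is_lie_bialg br brs, is_enl br M & is_enl brs M^T].

Definition coad n (br : 'rV[F]_n -> 'rV[F]_n -> 'rV[F]_n) (x xi : 'rV[F]_n) : 'rV[F]_n :=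
  \row_k (- pair xi (br x (ebasis k))).

(* Drinfel'd double d = g (+) g^*, element x + xi is row_mx x xi *)
Definition drinfeld_double n (br brs : 'rV[F]_n -> 'rV[F]_n -> 'rV[F]_n)
    (u v : 'rV[F]_(n + n)) : 'rV[F]_(n + n) :=
  let x := lsubmx u in let xi := rsubmx u in
  let y := lsubmx v in let eta := rsubmx v in
  row_mx (br x y + coad brs xi y - coad brs eta x)
         (brs xi eta + coad br x eta - coad br y xi).

(* d^*_r = g^* (+) g, element xi + x is row_mx xi x; the pairing of
   row_mx x xi' in d with row_mx xi x' in d^* is pair (row_mx ..) (row_mx ..)
   = <x,xi> + <xi',x'>. *)
Definition dual_r n (br brs : 'rV[F]_n -> 'rV[F]_n -> 'rV[F]_n)
    (u v : 'rV[F]_(n + n)) : 'rV[F]_(n + n) :=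
  row_mx (- brs (lsubmx u) (lsubmx v)) (br (rsubmx u) (rsubmx v)).

Definition bigE n (M : 'M[F]_n) : 'M[F]_(n + n) := block_mx M 0 0 M^T.

End Defs.

(* Main.v *)
Require Import Defs.
From mathcomp Require Import all_boot all_order all_algebra.
From mathcomp Require Import ring.
Set Implicit Arguments. Unset Strict Implicit. Unset Printing Implicit Defensive.
Import GRing.Theory.
Local Open Scope ring_scope.

Section Gen.
Variable F : fieldType.
Implicit Types (m : nat).

Lemma pairC m (u v : 'rV[F]_m) : pair u v = pair v u.
Proof. by rewrite /pair; apply: eq_bigr => i _; rewrite mulrC. Qed.

Lemma pairDl m (u v w : 'rV[F]_m) : pair (u + v) w = pair u w + pair v w.
Proof. by rewrite /pair -big_split; apply: eq_bigr => i _; rewrite mxE mulrDl. Qed.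

Lemma pairZl m a (u w : 'rV[F]_m) : pair (a *: u) w = a * pair u w.
Proof. by rewrite /pair mulr_sumr; apply: eq_bigr => i _; rewrite mxE mulrA. Qed.

Lemma pairNl m (u w : 'rV[F]_m) : pair (- u) w = - pair u w.
Proof. by rewrite -scaleN1r pairZl mulN1r. Qed.

Lemma pairBl m (u v w : 'rV[F]_m) : pair (u - v) w = pair u w - pair v w.
Proof. by rewrite pairDl pairNl. Qed.

Lemma pair0l m (w : 'rV[F]_m) : pair 0 w = 0.
Proof. by rewrite -(scale0r 0) pairZl mul0r. Qed.

Lemma pairDr m (u v w : 'rV[F]_m) : pair w (u + v) = pair w u + pair w v.
Proof. by rewrite !(pairC w) pairDl. Qed.
Lemma pairZr m a (u w : 'rV[F]_m) : pair w (a *: u) = a * pair w u.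
Proof. by rewrite !(pairC w) pairZl. Qed.
Lemma pairNr m (u w : 'rV[F]_m) : pair w (- u) = - pair w u.
Proof. by rewrite !(pairC w) pairNl. Qed.
Lemma pairBr m (u v w : 'rV[F]_m) : pair w (u - v) = pair w u - pair w v.
Proof. by rewrite !(pairC w) pairBl. Qed.
Lemma pair0r m (w : 'rV[F]_m) : pair w 0 = 0.
Proof. by rewrite pairC pair0l. Qed.

Lemma pair_e m (u : 'rV[F]_m) k : pair u (ebasis F k) = u 0 k.
Proof.
rewrite /pair (bigD1 k) //= big1 ?addr0 => [|i ik]; rewrite /ebasis mxE.
  by rewrite !eqxx mulr1.
by rewrite (negbTE ik) andbF mulr0.
Qed.

Lemma pair_extl m (u v : 'rV[F]_m) : (forall t, pair u t = pair v t) -> u = v.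
Proof. by move=> H; apply/rowP => k; rewrite -!pair_e H. Qed.

Lemma pair_extr m (u v : 'rV[F]_m) : (forall t, pair t u = pair t v) -> u = v.
Proof. by move=> H; apply: pair_extl => t; rewrite !(pairC _ t). Qed.

Lemma pairE m (u v : 'rV[F]_m) : pair u v = (u *m v^T) 0 0.
Proof. by rewrite /pair !mxE; apply: eq_bigr => i _; rewrite mxE. Qed.

Lemma pair_mul m (u v : 'rV[F]_m) (N : 'M[F]_m) : pair (u *m N) v = pair u (v *m N^T).
Proof. by rewrite !pairE trmx_mul trmxK mulmxA. Qed.

Lemma linF m (f : 'rV[F]_m -> F) :
  (forall a u v, f (a *: u + v) = a * f u + f v) ->
  forall u, f u = \sum_i u 0 i * f (ebasis F i).
Proof.
move=> H.
have f0 : f 0 = 0.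
  have h := H 1 0 0; rewrite scaler0 addr0 mul1r in h.
  by apply: (addrI (f 0)); rewrite addr0 -h.
have fD u v : f (u + v) = f u + f v by rewrite -{1}(scale1r u) H mul1r.
have fZ a u : f (a *: u) = a * f u by rewrite -{1}(addr0 (a *: u)) H f0 addr0.
move=> u; rewrite {1}(row_sum_delta u).
apply: (big_rec2 (fun a b => f a = b)) => [//|i y1 y2 _ IH].
by rewrite fD fZ IH.
Qed.

Definition bil m (b : 'rV[F]_m -> 'rV[F]_m -> 'rV[F]_m) :=
  (forall a x y z, b (a *: x + y) z = a *: b x z + b y z) /\
  (forall a x y z, b z (a *: x + y) = a *: b z x + b z y).

Section Bil.
Variables (m : nat) (b : 'rV[F]_m -> 'rV[F]_m -> 'rV[F]_m) (Hb : bil b).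

Lemma b0l z : b 0 z = 0.
Proof.
have h := Hb.1 1 0 0 z; rewrite scaler0 addr0 scale1r in h.
by apply: (addrI (b 0 z)); rewrite addr0 -h.
Qed.
Lemma b0r z : b z 0 = 0.
Proof.
have h := Hb.2 1 0 0 z; rewrite scaler0 addr0 scale1r in h.
by apply: (addrI (b z 0)); rewrite addr0 -h.
Qed.
Lemma bDl x y z : b (x + y) z = b x z + b y z.
Proof. by rewrite -(scale1r x) Hb.1 !scale1r. Qed.
Lemma bDr x y z : b z (x + y) = b z x + b z y.
Proof. by rewrite -(scale1r x) Hb.2 !scale1r. Qed.
Lemma bZl a x z : b (a *: x) z = a *: b x z.
Proof. by rewrite -(addr0 (a *: x)) Hb.1 b0l addr0. Qed.
Lemma bZr a x z : b z (a *: x) = a *: b z x.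
Proof. by rewrite -(addr0 (a *: x)) Hb.2 b0r addr0. Qed.
Lemma bNl x z : b (- x) z = - b x z.
Proof. by rewrite -scaleN1r bZl scaleN1r. Qed.
Lemma bNr x z : b z (- x) = - b z x.
Proof. by rewrite -scaleN1r bZr scaleN1r. Qed.
Lemma bBl x y z : b (x - y) z = b x z - b y z.
Proof. by rewrite bDl bNl. Qed.
Lemma bBr x y z : b z (x - y) = b z x - b z y.
Proof. by rewrite bDr bNr. Qed.

Lemma bsum (I : finType) (c : I -> F) (w : I -> 'rV[F]_m) z :
  b (\sum_i c i *: w i) z = \sum_i c i *: b (w i) z.
Proof.
apply: (big_rec2 (fun a r => b a z = r)) => [|i y1 y2 _ IH]; first exact: b0l.
by rewrite bDl bZl IH.
Qed.

Lemma pair_coad x xi y : pair (coad b x xi) y = - pair xi (b x y).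
Proof.
have lin : forall a u v, - pair xi (b x (a *: u + v)) =
   a * (- pair xi (b x u)) + (- pair xi (b x v)).
  by move=> a u v; rewrite Hb.2 pairDr pairZr; ring.
rewrite (linF lin y) /pair; apply: eq_bigr => i _.
by rewrite mxE mulrC.
Qed.

Lemma coadDr x u v : coad b x (u + v) = coad b x u + coad b x v.
Proof. by apply/rowP => k; rewrite !mxE pairDl opprD. Qed.
Lemma coadZr a x u : coad b x (a *: u) = a *: coad b x u.
Proof. by apply/rowP => k; rewrite !mxE pairZl mulrN. Qed.
Lemma coadNr x u : coad b x (- u) = - coad b x u.
Proof. by apply/rowP => k; rewrite !mxE pairNl. Qed.
Lemma coadBr x u v : coad b x (u - v) = coad b x u - coad b x v.
Proof. by rewrite coadDr coadNr. Qed.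
Lemma coad0r x : coad b x 0 = 0.
Proof. by apply/rowP => k; rewrite !mxE pair0l oppr0. Qed.
Lemma coadDl x y u : coad b (x + y) u = coad b x u + coad b y u.
Proof. by apply/rowP => k; rewrite !mxE bDl pairDr opprD. Qed.
Lemma coadZl a x u : coad b (a *: x) u = a *: coad b x u.
Proof. by apply/rowP => k; rewrite !mxE bZl pairZr mulrN. Qed.
Lemma coadNl x u : coad b (- x) u = - coad b x u.
Proof. by apply/rowP => k; rewrite !mxE bNl pairNr. Qed.
Lemma coadBl x y u : coad b (x - y) u = coad b x u - coad b y u.
Proof. by rewrite coadDl coadNl. Qed.
Lemma coad0l u : coad b 0 u = 0.
Proof. by apply/rowP => k; rewrite !mxE b0l pair0r oppr0. Qed.

Lemma bsumr (I : finType) (c : I -> F) (w : I -> 'rV[F]_m) z :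
  b z (\sum_i c i *: w i) = \sum_i c i *: b z (w i).
Proof.
apply: (big_rec2 (fun a r => b z a = r)) => [|i y1 y2 _ IH]; first exact: b0r.
by rewrite bDr bZr IH.
Qed.

Lemma mul_adm x z : z *m adm b x = b x z.
Proof.
apply/rowP => j; rewrite !mxE.
rewrite {2}(row_sum_delta z) bsumr summxE; apply: eq_bigr => i _.
by rewrite !mxE.
Qed.

Lemma banti (Ha : forall x, b x x = 0) x y : b x y = - b y x.
Proof.
have := Ha (x + y); rewrite bDl !bDr !Ha add0r addr0 => /eqP.
by rewrite addr_eq0 => /eqP.
Qed.

Lemma bL (Ha : forall x, b x x = 0)
  (Hj : forall x y z, b x (b y z) + b y (b z x) + b z (b x y) = 0) a a' c :
  b (b a a') c = b a (b a' c) - b a' (b a c).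
Proof.
have h := Hj c a a'; rewrite (banti Ha c a) bNr in h.
move/eqP: h; rewrite -addrA addrC addr_eq0 => /eqP ->.
by rewrite -(banti Ha).
Qed.

Lemma adm_br (Ha : forall x, b x x = 0)
  (Hj : forall x y z, b x (b y z) + b y (b z x) + b z (b x y) = 0) u v :
  adm b (b u v) = adm b v *m adm b u - adm b u *m adm b v.
Proof.
apply/row_matrixP => i; rewrite !rowE mulmxBr !mulmxA !mul_adm.
by rewrite (bL Ha Hj).
Qed.

End Bil.

Lemma coadM1 m (b : 'rV[F]_m -> 'rV[F]_m -> 'rV[F]_m) (Hb : bil b) (N : 'M[F]_m)
  (HN : forall u v, b u v *m N = b u (v *m N)) x t :
  coad b x t *m N^T = coad b x (t *m N^T).
Proof.
apply: pair_extr => y.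
rewrite pairC pair_mul trmxK (pair_coad Hb) -HN.
rewrite (pairC y) (pair_coad Hb) (pairC t).
by rewrite pair_mul pairC.
Qed.

Lemma coadM2 m (b : 'rV[F]_m -> 'rV[F]_m -> 'rV[F]_m) (Hb : bil b)
  (Ha : forall x, b x x = 0) (N : 'M[F]_m)
  (HN : forall u v, b u v *m N = b u (v *m N)) x t :
  coad b x t *m N^T = coad b (x *m N) t.
Proof.
rewrite (coadM1 Hb HN); apply: pair_extr => y.
rewrite (pairC y) (pair_coad Hb).
rewrite (pairC y) (pair_coad Hb).
rewrite (banti Hb Ha (x *m N)) -HN -mulNmx -(banti Hb Ha x y).
by rewrite pair_mul trmxK.
Qed.

Lemma zmod6M m (a b' c d e f : 'M[F]_m) :
  -((a - b') + (c - d)) = (-(a + e) + -(f + c)) - (-(b' + f) + -(e + d)).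
Proof. by apply/matrixP => i j; rewrite !mxE; ring. Qed.

Lemma coboundary m (b bs : 'rV[F]_m -> 'rV[F]_m -> 'rV[F]_m) (R : 'M[F]_m) :
  is_lie b -> (forall w, cobr bs w = - ((adm b w)^T *m R + R *m adm b w)) ->
  forall u v, cobr bs (b u v) =
    ((adm b u)^T *m cobr bs v + cobr bs v *m adm b u)
  - ((adm b v)^T *m cobr bs u + cobr bs u *m adm b v).
Proof.
move=> Hl H u v.
have Hb : bil b by case: Hl => ? ? _ _; split.
have Ha : forall x, b x x = 0 by case: Hl.
have Hj : forall x y z, b x (b y z) + b y (b z x) + b z (b x y) = 0 by case: Hl.
rewrite !H (adm_br Hb Ha Hj).
move: (adm b u) (adm b v) => P Q.
rewrite linearB /= !trmx_mul mulmxBl mulmxBr !mulmxN !mulNmx !mulmxDr !mulmxDl !mulmxA.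
exact: zmod6M.
Qed.
End Gen.
Section Main.
Variables (F : fieldType) (n : nat) (br brs : 'rV[F]_n -> 'rV[F]_n -> 'rV[F]_n).
Hypotheses (Hl : is_lie br) (Hls : is_lie brs).
Definition cocP := forall x y xi eta,
  pair (br x y) (brs xi eta) =
   (- pair y (brs (coad br x xi) eta) - pair y (brs xi (coad br x eta)))
 - (- pair x (brs (coad br y xi) eta) - pair x (brs xi (coad br y eta))).
Hypothesis Hc : cocP.

Local Notation ad := (coad br).
Local Notation ads := (coad brs).

Lemma Hb : bil br. Proof. by case: Hl => ? ? _ _; split. Qed.
Lemma Hbs : bil brs. Proof. by case: Hls => ? ? _ _; split. Qed.
Lemma alt x : br x x = 0. Proof. by case: Hl. Qed.
Lemma alts x : brs x x = 0. Proof. by case: Hls. Qed.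
Lemma jac x y z : br x (br y z) + br y (br z x) + br z (br x y) = 0. Proof. by case: Hl. Qed.
Lemma jacs x y z : brs x (brs y z) + brs y (brs z x) + brs z (brs x y) = 0. Proof. by case: Hls. Qed.
Lemma anti x y : br x y = - br y x. Proof. exact: (banti Hb alt). Qed.
Lemma antis x y : brs x y = - brs y x. Proof. exact: (banti Hbs alts). Qed.

Lemma L1 x y t : pair (br x y) t = - pair y (ad x t).
Proof. by rewrite pairC (pairC y) (pair_coad Hb) opprK. Qed.
Lemma L3 xi y t : pair (ads xi y) t = - pair y (brs xi t).
Proof. exact: (pair_coad Hbs). Qed.
Lemma adswap t w xi : pair t (ad w xi) = - pair w (ad t xi).
Proof. by rewrite -[pair t _]opprK -L1 anti pairNl L1 opprK. Qed.
Lemma L4 t eta z xi : pair t (ad (ads eta z) xi) = pair z (brs eta (ad t xi)).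
Proof. by rewrite adswap L3 opprK. Qed.
Lemma brL a b c : br (br a b) c = br a (br b c) - br b (br a c).
Proof.
have h := jac c a b; rewrite (anti c a) (bNr Hb) in h.
move/eqP: h; rewrite -addrA addrC addr_eq0 => /eqP ->.
by rewrite -anti.
Qed.
Lemma brsL a b c : brs (brs a b) c = brs a (brs b c) - brs b (brs a c).
Proof.
have h := jacs c a b; rewrite (antis c a) (bNr Hbs) in h.
move/eqP: h; rewrite -addrA addrC addr_eq0 => /eqP ->.
by rewrite -antis.
Qed.
Lemma adrep a b t : ad (br a b) t = ad a (ad b t) - ad b (ad a t).
Proof.
apply: pair_extr => z.
rewrite pairBr -[pair z (ad (br a b) t)]opprK -(L1 (br a b)) brL pairBl !L1; ring.
Qed.

Lemma cocy x y xi eta : pair y (ad x (brs xi eta)) =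
  pair y (brs (ad x xi) eta) + pair y (brs xi (ad x eta))
  - pair x (brs (ad y xi) eta) - pair x (brs xi (ad y eta)).
Proof. have := Hc x y xi eta; rewrite L1 => h; apply: oppr_inj; rewrite h; ring. Qed.

Lemma brsC_ad a b c : brs (ad a b) c = - brs c (ad a b).
Proof. exact: antis. Qed.

Lemma jacP x y z t : pair z (ad y (ad x t)) = - pair x (ad z (ad y t)) - pair y (ad x (ad z t)).
Proof.
have := congr1 (fun a => pair a t) (jac x y z); rewrite pair0l !pairDl !L1 !opprK => h.
apply/eqP; rewrite -subr_eq0; apply/eqP; rewrite -h; ring.
Qed.

Lemma jacsP x y z t : pair t (brs x (brs y z)) = - pair t (brs y (brs z x)) - pair t (brs z (brs x y)).
Proof.
have := congr1 (fun a => pair t a) (jacs x y z); rewrite pair0r !pairDr => h.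
apply/eqP; rewrite -subr_eq0; apply/eqP; rewrite -h; ring.
Qed.

Ltac norm := rewrite ?(pairDl, pairBl, pairNl, pairDr, pairBr, pairNr, pair0l, pair0r,
  bDl Hb, bBl Hb, bNl Hb, bDr Hb, bBr Hb, bNr Hb, b0l Hb, b0r Hb,
  bDl Hbs, bBl Hbs, bNl Hbs, bDr Hbs, bBr Hbs, bNr Hbs, b0l Hbs, b0r Hbs,
  coadDr, coadBr, coadNr, coad0r,
  coadDl Hb, coadBl Hb, coadNl Hb, coad0l Hb,
  coadDl Hbs, coadBl Hbs, coadNl Hbs, coad0l Hbs,
  pairZl, pairZr, bZl Hb, bZr Hb, bZl Hbs, bZr Hbs, coadZr, coadZl Hb, coadZl Hbs,
  L1, L3, L4, brL, brsL, adrep, cocy).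

Local Notation dd := (drinfeld_double br brs).

Lemma dd_row x xi y eta : dd (row_mx x xi) (row_mx y eta) =
  row_mx (br x y + ads xi y - ads eta x) (brs xi eta + ad x eta - ad y xi).
Proof. by rewrite /drinfeld_double !row_mxKl !row_mxKr. Qed.

Lemma dd_jac u v w : dd u (dd v w) + dd v (dd w u) + dd w (dd u v) = 0.
Proof.
rewrite -[u]hsubmxK -[v]hsubmxK -[w]hsubmxK.
move: (lsubmx u) (rsubmx u) (lsubmx v) (rsubmx v) (lsubmx w) (rsubmx w).
move=> x xi y eta z zeta.
rewrite !dd_row !add_row_mx -row_mx0; congr row_mx.
  apply: pair_extl => t; norm; rewrite (jacP x y z t). ring.
apply: pair_extr => t; norm; rewrite !brsC_ad (jacsP xi eta zeta t) !pairNr; ring.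
Qed.

Lemma dd_lie : is_lie dd.
Proof.
split.
- move=> a u v w.
  rewrite -[u]hsubmxK -[v]hsubmxK -[w]hsubmxK.
  move: (lsubmx u) (rsubmx u) (lsubmx v) (rsubmx v) (lsubmx w) (rsubmx w).
  move=> x xi y eta z zeta.
  rewrite scale_row_mx add_row_mx !dd_row scale_row_mx add_row_mx.
  congr row_mx; [apply: pair_extl | apply: pair_extr] => t; norm; ring.
- move=> a u v w.
  rewrite -[u]hsubmxK -[v]hsubmxK -[w]hsubmxK.
  move: (lsubmx u) (rsubmx u) (lsubmx v) (rsubmx v) (lsubmx w) (rsubmx w).
  move=> x xi y eta z zeta.
  rewrite scale_row_mx add_row_mx !dd_row scale_row_mx add_row_mx.
  congr row_mx; [apply: pair_extl | apply: pair_extr] => t; norm; ring.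
- move=> u; rewrite -[u]hsubmxK; move: (lsubmx u) (rsubmx u) => x xi.
  by rewrite dd_row alt alts !add0r !subrr row_mx0.
- exact: dd_jac.
Qed.

Local Notation du := (dual_r br brs).

Lemma du_row xi x eta y : du (row_mx xi x) (row_mx eta y) =
  row_mx (- brs xi eta) (br x y).
Proof. by rewrite /dual_r !row_mxKl !row_mxKr. Qed.

Lemma du_lie : is_lie du.
Proof.
split.
- move=> a u v w.
  rewrite -[u]hsubmxK -[v]hsubmxK -[w]hsubmxK.
  move: (lsubmx u) (rsubmx u) (lsubmx v) (rsubmx v) (lsubmx w) (rsubmx w).
  move=> x xi y eta z zeta.
  rewrite scale_row_mx add_row_mx !du_row scale_row_mx add_row_mx.
  by rewrite Hbs.1 Hb.1 opprD scalerN.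
- move=> a u v w.
  rewrite -[u]hsubmxK -[v]hsubmxK -[w]hsubmxK.
  move: (lsubmx u) (rsubmx u) (lsubmx v) (rsubmx v) (lsubmx w) (rsubmx w).
  move=> x xi y eta z zeta.
  rewrite scale_row_mx add_row_mx !du_row scale_row_mx add_row_mx.
  by rewrite Hbs.2 Hb.2 opprD scalerN.
- move=> u; rewrite -[u]hsubmxK; move: (lsubmx u) (rsubmx u) => x xi.
  by rewrite du_row alt alts oppr0 row_mx0.
- move=> u v w.
  rewrite -[u]hsubmxK -[v]hsubmxK -[w]hsubmxK.
  move: (lsubmx u) (rsubmx u) (lsubmx v) (rsubmx v) (lsubmx w) (rsubmx w).
  move=> x xi y eta z zeta.
  by rewrite !du_row !(bNr Hbs) !opprK !add_row_mx jac jacs row_mx0.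
Qed.

Variable M : 'M[F]_n.
Hypotheses (HE : forall x y, br x y *m M = br x (y *m M))
           (HEs : forall x y, brs x y *m M^T = brs x (y *m M^T)).

Lemma dd_enl u v : dd u v *m bigE M = dd u (v *m bigE M).
Proof.
have cs1 a b : ads a b *m M = ads a (b *m M).
  by have := coadM1 Hbs HEs a b; rewrite trmxK.
have cs2 a b : ads a b *m M = ads (a *m M^T) b.
  by have := coadM2 Hbs alts HEs a b; rewrite trmxK.
have c1 a b : ad a b *m M^T = ad a (b *m M^T) by exact: (coadM1 Hb HE a b).
have c2 a b : ad a b *m M^T = ad (a *m M) b by exact: (coadM2 Hb alt HE a b).
rewrite -[u]hsubmxK -[v]hsubmxK.
move: (lsubmx u) (rsubmx u) (lsubmx v) (rsubmx v) => x xi y eta.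
rewrite /bigE dd_row !mul_row_block !mulmx0 !addr0 !add0r dd_row.
congr row_mx.
  by rewrite mulmxBl mulmxDl HE (cs1 xi y) (cs2 eta x).
by rewrite mulmxBl mulmxDl HEs (c1 x eta) (c2 y xi).
Qed.

Lemma du_enl u v : du u v *m (bigE M)^T = du u (v *m (bigE M)^T).
Proof.
rewrite -[u]hsubmxK -[v]hsubmxK.
move: (lsubmx u) (rsubmx u) (lsubmx v) (rsubmx v) => x xi y eta.
rewrite /bigE tr_block_mx !trmx0 trmxK du_row !mul_row_block !mulmx0 !addr0 !add0r.
by rewrite du_row mulNmx HEs HE.
Qed.

Lemma pair_row (a b c d : 'rV[F]_n) : pair (row_mx a b) (row_mx c d) = pair a c + pair b d.
Proof.
rewrite /pair big_split_ord; congr (_ + _); apply: eq_bigr => i _.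
  by rewrite !row_mxEl.
by rewrite !row_mxEr.
Qed.

Lemma pair_d (u : 'rV[F]_n) k : pair u (delta_mx 0 k) = u 0 k.
Proof. exact: pair_e. Qed.
Lemma pair_d' (u : 'rV[F]_n) k : pair (delta_mx 0 k) u = u 0 k.
Proof. by rewrite pairC pair_d. Qed.

Lemma splitl (l : 'I_n) : split (lshift n l) = inl l.
Proof. by rewrite -[lshift n l]/(unsplit (inl l)) unsplitK. Qed.
Lemma splitr (l : 'I_n) : split (rshift n l) = inr l.
Proof. by rewrite -[rshift n l]/(unsplit (inr l)) unsplitK. Qed.

Definition Rm : 'M[F]_(n + n) := block_mx 0 1%:M 0 0.

Lemma dd_cob w : cobr du w = - ((adm dd w)^T *m Rm + Rm *m adm dd w).
Proof.
rewrite /Rm -[adm dd w]submxK tr_block_mx !mulmx_block.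
rewrite !(mulmx0, mul0mx, mulmx1, mul1mx, addr0, add0r) add_block_mx opp_block_mx.
rewrite -[cobr du w]submxK; rewrite -[w]hsubmxK.
move: (lsubmx w) (rsubmx w) => x xi.
congr block_mx; apply/matrixP => k l; rewrite !mxE /ebasis
  ?delta_mx_lshift ?delta_mx_rshift ?du_row ?splitl ?splitr /= ?row_mxKl ?row_mxKr.
all: rewrite pair_row ?(b0l Hb, b0r Hb, b0l Hbs, b0r Hbs, coad0l Hb, coad0l Hbs, coad0r).
all: rewrite ?mxE /ebasis ?(pair_d', pairNr, pair0r, pair0l, pairNl).
- ring.
- ring.
- ring.
rewrite (anti 'e_k) pairNr; ring.
Qed.

Lemma entD m (A B : 'M[F]_m) i j : (A + B) i j = A i j + B i j.
Proof. by rewrite mxE. Qed.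
Lemma entN m (A : 'M[F]_m) i j : (- A) i j = - A i j.
Proof. by rewrite mxE. Qed.

Lemma cocP_of
  (H : forall x y, cobr brs (br x y) =
     ((adm br x)^T *m cobr brs y + cobr brs y *m adm br x)
   - ((adm br y)^T *m cobr brs x + cobr brs x *m adm br y)) : cocP.
Proof.
have E1 x y k j : ((adm br x)^T *m cobr brs y) k j =
    - pair y (brs (ad x (ebasis F k)) (ebasis F j)).
  pose f := fun xi => pair y (brs xi (ebasis F j)).
  have lin : forall a u v, f (a *: u + v) = a * f u + f v.
    by move=> a u v; rewrite /f Hbs.1 pairDr pairZr.
  have h := linF lin (ad x (ebasis F k)); rewrite /f /= in h; rewrite h.
  rewrite mxE -sumrN; apply: eq_bigr => i _.
  by rewrite !mxE (pairC (ebasis F k)) pair_e; ring.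
have E2 x y k j : (cobr brs y *m adm br x) k j =
    - pair y (brs (ebasis F k) (ad x (ebasis F j))).
  pose f := fun eta => pair y (brs (ebasis F k) eta).
  have lin : forall a u v, f (a *: u + v) = a * f u + f v.
    by move=> a u v; rewrite /f Hbs.2 pairDr pairZr.
  have h := linF lin (ad x (ebasis F j)); rewrite /f /= in h; rewrite h.
  rewrite mxE -sumrN; apply: eq_bigr => i _.
  by rewrite !mxE (pairC (ebasis F j)) pair_e; ring.
move=> x y.
pose D xi eta := pair (br x y) (brs xi eta) -
   ((- pair y (brs (ad x xi) eta) - pair y (brs xi (ad x eta)))
  - (- pair x (brs (ad y xi) eta) - pair x (brs xi (ad y eta)))).
have hb k j : D (ebasis F k) (ebasis F j) = 0.
  have := congr1 (fun A : 'M[F]_n => A k j) (H x y).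
  rewrite /= !(entD, entN) !E1 !E2 mxE /D => ->.
  by rewrite subrr.
have lin1 eta : forall a u v, D (a *: u + v) eta = a * D u eta + D v eta.
  move=> a u v; rewrite /D.
  rewrite !(coadDr, coadZr, bDl Hbs, bZl Hbs, bDr Hbs, bZr Hbs, pairDr, pairZr).
  ring.
have lin2 xi : forall a u v, D xi (a *: u + v) = a * D xi u + D xi v.
  move=> a u v; rewrite /D.
  rewrite !(coadDr, coadZr, bDl Hbs, bZl Hbs, bDr Hbs, bZr Hbs, pairDr, pairZr).
  ring.
have hD xi eta : D xi eta = 0.
  rewrite (linF (lin1 eta)) big1 // => k _.
  rewrite (linF (lin2 (ebasis F k))) big1 ?mulr0 // => j _.
  by rewrite hb mulr0.
move=> xi eta; apply/eqP; rewrite -subr_eq0; apply/eqP; exact: hD.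
Qed.

End Main.

Unset Implicit Arguments.

Theorem proposition3p10 (F : closedFieldType) (charF0 : [pchar F] =i pred0)
  (n : nat) (br brs : 'rV[F]_n -> 'rV[F]_n -> 'rV[F]_n) (M : 'M[F]_n) :
  is_enl_bialg br brs M ->
  is_enl_bialg (drinfeld_double br brs) (dual_r br brs) (bigE M).
Proof.
case=> [[Hl Hls Hcm] [_ HE] [_ HEs]].
have Hc := cocP_of Hls Hcm.
have Ld := dd_lie Hl Hls Hc.
split; [split | split | split].
- exact: Ld.
- exact: du_lie.
- exact: (coboundary Ld (dd_cob Hl Hls)).
- exact: Ld.
- by move=> u v; apply: (dd_enl Hl Hls HE HEs).
- exact: du_lie.
- by move=> u v; apply: (du_enl HE HEs).
Qed.
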